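(* Let $S=(\Lambda,L)$ on $X$ and $S'=(\Lambda',L')$ on $X'$ be bispectrally dual completely integrable quantum systems, with anti-isomorphism $b:B\to B'$. Let $f\in\mathcal{O}(\Lambda)$ and $g\in\mathcal{O}(\Lambda')$ (the latter viewed, via $\pi'$, as a multiplication operator in $\mathcal{D}(X)$), and let $m=\operatorname{ord}L_f$ and $n=\operatorname{ord}L'_g$. Then there exist elements $K,Q,R\in B$ satisfying $$g^{m+1}\circ L_f=K\circ g,\qquad L_f\circ g^{m+1}=g\circ R,\qquad L_f^{n+1}\circ g=Q\circ L_f.$$
   Context: All varieties are over an algebraically closed field $\mathbb{F}$ of characteristic zero; $\mathcal{D}(X)$ denotes the ring of differential operators on $X$ and $\mathcal{O}(X)$ its coordinate ring. A quantum Hamiltonian system (QHS) on a smooth irreducible affine variety $X$ is a pair $S=(\Lambda,L)$ where $\Lambda$ is an affine variety over $\mathbb{F}$ and $L:\mathcal{O}(\Lambda)\to\mathcal{D}(X)$, $h\mapsto L_h$, is an embedding of rings; it is a completely integrable quantum system if $\dim\Lambda=\dim X$. For QHSs $S=(\Lambda,L)$ on $X$ and $S'=(\Lambda',L')$ on $X'$, suppose $X'$ covers $\Lambda$ and $X$ covers $\Lambda'$, giving natural embeddings $\pi:\mathcal{O}(\Lambda)\to\mathcal{O}(X')$ and $\pi':\mathcal{O}(\Lambda')\to\mathcal{O}(X)$; functions act as multiplication operators, so $\mathcal{O}(X)\subset\mathcal{D}(X)$, and one writes $g$ for $\pi'(g)$ and $f$ for $\pi(f)$. Let $B\subset\mathcal{D}(X)$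 be the subring generated by the images of $L$ and $\pi'$, and $B'\subset\mathcal{D}(X')$ the subring generated by the images of $L'$ and $\pi$. $S$ and $S'$ are bispectrally dual if there is a map $b:B\to B'$ with $b(L_h)=\pi(h)$ for all $h\in\mathcal{O}(\Lambda)$, $b(\pi'(k))=L'_k$ for all $k\in\mathcal{O}(\Lambda')$, $b(P_1P_2)=b(P_2)b(P_1)$ and $b(P_1+P_2)=b(P_1)+b(P_2)$ for all $P_1,P_2\in B$, and $b(P)=0$ iff $P=0$. *)

(* Defs.v *)
(* Affine varieties are modelled by their coordinate rings
   (commutative F-algebras), differential operators by Grothendieck's
   definition inside the F-linear endomorphisms A -> A. *)
From HB Require Import structures.
From mathcomp Require Import all_boot all_order all_algebra.
Set Implicit Arguments. Unset Strict Implicit. Unset Printing Implicit Defensive.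
Import GRing.Theory.
Local Open Scope ring_scope.

Section Varieties.
Variable F : fieldType.

Inductive in_gen_alg (C : comAlgType F) (s : seq C) : C -> Prop :=
  | gen_elt x : x \in s -> in_gen_alg s x
  | gen_scal (k : F) : in_gen_alg s (k%:A)
  | gen_add x y : in_gen_alg s x -> in_gen_alg s y -> in_gen_alg s (x + y)
  | gen_mul x y : in_gen_alg s x -> in_gen_alg s y -> in_gen_alg s (x * y).

Definition fin_gen_alg (C : comAlgType F) : Prop :=
  exists s : seq C, forall x : C, in_gen_alg s x.

Definition reduced_ring (C : comAlgType F) : Prop :=
  forall (x : C) (n : nat), x ^+ n = 0 -> x = 0.

Definition domain_ring (C : comAlgType F) : Prop :=
  forall x y : C, x * y = 0 -> x = 0 \/ y = 0.

Definition prime_ideal (C : comAlgType F) (P : C -> Prop) : Prop :=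
  [/\ P 0, (forall x y, P x -> P y -> P (x + y)),
      (forall a x, P x -> P (a * x)), ~ P 1 &
      (forall x y, P (x * y) -> P x \/ P y)].

Definition prime_chain (C : comAlgType F) (d : nat) (P : nat -> C -> Prop) :=
  (forall i, i <= d -> prime_ideal (P i))%N /\
  (forall i, i < d -> (forall x, P i x -> P i.+1 x) /\
                      exists x, P i.+1 x /\ ~ P i x)%N.

Definition krull_dim (C : comAlgType F) (d : nat) : Prop :=
  (exists P, @prime_chain C d P) /\ ~ (exists P, @prime_chain C d.+1 P).

Definition affine_coord_ring (C : comAlgType F) : Prop :=
  fin_gen_alg C /\ reduced_ring C.

(* F-points of Spec A (= points of the variety, F algebraically closed) *)
Definition is_point (A : comAlgType F) (chi : A -> F) : Prop :=
  [/\ forall x y, chi (x + y) = chi x + chi y,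
      forall x y, chi (x * y) = chi x * chi y,
      chi 1 = 1 &
      forall (k : F) x, chi (k *: x) = k * chi x].

Definition tangent_vec (A : comAlgType F) (chi : A -> F) (v : A -> F) : Prop :=
  [/\ forall x y, v (x + y) = v x + v y,
      forall (k : F) x, v (k *: x) = k * v x &
      forall x y, v (x * y) = chi x * v y + chi y * v x].

Definition tangent_dim (A : comAlgType F) (chi : A -> F) (d : nat) : Prop :=
  exists e : 'I_d -> (A -> F),
    [/\ forall i, tangent_vec chi (e i),
        (forall c : 'I_d -> F,
           (forall x, \sum_i c i * e i x = 0) -> forall i, c i = 0) &
        (forall v, tangent_vec chi v ->
           exists c : 'I_d -> F, forall x, v x = \sum_i c i * e i x)].

Definition smooth_irred_affine (A : comAlgType F) : Prop :=
  [/\ fin_gen_alg A, domain_ring A &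
      exists d, krull_dim A d /\
                forall chi : A -> F, is_point chi -> tangent_dim chi d].

Definition mulop (A : comAlgType F) (a : A) : A -> A := fun x => a * x.

Definition F_linear (A : comAlgType F) (P : A -> A) : Prop :=
  forall (k : F) x y, P (k *: x + y) = k *: P x + P y.

Fixpoint diffop_le (A : comAlgType F) (k : nat) (P : A -> A) : Prop :=
  F_linear P /\
  match k with
  | 0 => forall a x, P (a * x) = a * P x
  | k'.+1 => forall a : A, diffop_le k' (fun x => P (a * x) - a * P x)
  end.

Definition is_diffop (A : comAlgType F) (P : A -> A) : Prop :=
  exists k, diffop_le k P.

Definition diffop_ord (A : comAlgType F) (P : A -> A) (m : nat) : Prop :=
  diffop_le m P /\ forall k, diffop_le k P -> (m <= k)%N.

Definition opow (A : comAlgType F) (P : A -> A) (n : nat) : A -> A :=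
  iter n (fun Q => P \o Q) id.

(* S = (Lambda, L) on X: C = O(Lambda), A = O(X),
   L : O(Lambda) -> D(X) an embedding of rings *)
Definition QHS (A C : comAlgType F) (L : C -> (A -> A)) : Prop :=
  smooth_irred_affine A /\ affine_coord_ring C /\
  (forall h, is_diffop (L h)) /\
  (forall h1 h2, L (h1 + h2) = (fun x => L h1 x + L h2 x)) /\
  (forall h1 h2, L (h1 * h2) = L h1 \o L h2) /\
  L 1 = id /\
  injective L.

Definition CIQS (A C : comAlgType F) (L : C -> (A -> A)) : Prop :=
  QHS L /\ exists d, krull_dim A d /\ krull_dim C d.

(* embedding O(Lambda) -> O(X') coming from a covering X' -> Lambda *)
Definition alg_embedding (C A : comAlgType F) (p : C -> A) : Prop :=
  (forall x y, p (x + y) = p x + p y) /\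
  (forall x y, p (x * y) = p x * p y) /\
  p 1 = 1 /\
  (forall (k : F) x, p (k *: x) = k *: p x) /\
  injective p.

Inductive inB (A C C' : comAlgType F) (L : C -> (A -> A)) (pi' : C' -> A)
  : (A -> A) -> Prop :=
  | inB_L h : inB L pi' (L h)
  | inB_pi k : inB L pi' (mulop (pi' k))
  | inB_add P Q : inB L pi' P -> inB L pi' Q -> inB L pi' (fun x => P x + Q x)
  | inB_opp P : inB L pi' P -> inB L pi' (fun x => - P x)
  | inB_mul P Q : inB L pi' P -> inB L pi' Q -> inB L pi' (P \o Q).

Definition bispectral_dual (A C A' C' : comAlgType F)
  (L : C -> (A -> A)) (L' : C' -> (A' -> A'))
  (pi : C -> A') (pi' : C' -> A) (b : (A -> A) -> (A' -> A')) : Prop :=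
  [/\ forall h, b (L h) = mulop (pi h),
      forall k, b (mulop (pi' k)) = L' k,
      forall P1 P2, inB L pi' P1 -> inB L pi' P2 -> b (P1 \o P2) = b P2 \o b P1,
      forall P1 P2, inB L pi' P1 -> inB L pi' P2 ->
        b (fun x => P1 x + P2 x) = (fun x => b P1 x + b P2 x) &
      forall P, inB L pi' P -> (b P = (fun _ => 0) <-> P = (fun _ => 0))].

End Varieties.

(* Main.v *)
Require Import Defs.
From HB Require Import structures.
From mathcomp Require Import all_boot all_order all_algebra.
From Stdlib Require Import FunctionalExtensionality.
Import GRing.Theory.
Local Open Scope ring_scope.

Section Helpers.
Variable F : fieldType.
Variable A : comAlgType F.

Definition Dop (c : A) (Z : A -> A) : A -> A := fun x => Z (c * x) - c * Z x.

Lemma D_iter_zero (c : A) k (Y : A -> A) :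
  diffop_le k Y -> iter k.+1 (Dop c) Y = (fun _ => 0).
Proof.
elim: k Y => [|k IH] Y [_ H].
  apply: functional_extensionality => x; rewrite /= /Dop H subrr //.
rewrite iterSr; exact: (IH _ (H c)).
Qed.

Variable Bp : (A -> A) -> Prop.
Hypothesis Badd : forall {P Q}, Bp P -> Bp Q -> Bp (fun x => P x + Q x).
Hypothesis Bopp : forall {P}, Bp P -> Bp (fun x => - P x).
Hypothesis Bmul : forall {P Q}, Bp P -> Bp Q -> Bp (P \o Q).

Lemma Bmulop_exp (a : A) : Bp (mulop a) -> forall k, Bp (mulop (a ^+ k.+1)).
Proof.
move=> Ha; elim=> [|k IH]; first by rewrite expr1.
have -> : mulop (a ^+ k.+2) = mulop a \o mulop (a ^+ k.+1).
  apply: functional_extensionality => x; rewrite /mulop /= exprS mulrA //.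
exact: Bmul.
Qed.

Lemma claim1 (a : A) : Bp (mulop a) -> forall k P, Bp P -> diffop_le k P ->
  exists K, Bp K /\ mulop (a ^+ k.+1) \o P = K \o mulop a.
Proof.
move=> Ha; elim=> [|k IH] P HP [_ HD].
  exists P; split => //; apply: functional_extensionality => x.
  by rewrite /mulop /= expr1 HD.
have HQ : Bp (fun x => P (a * x) - a * P x) :=
  Badd (Bmul HP Ha) (Bopp (Bmul Ha HP)).
have [K' [HK' EK']] := IH _ HQ (HD a).
exists (fun x => (mulop (a ^+ k.+1) \o P) x - K' x); split.
  by apply: Badd; [apply: Bmul => //; exact: Bmulop_exp | exact: Bopp].
apply: functional_extensionality => x.
have := equal_f EK' x; rewrite /mulop /= => E.
rewrite -E exprSr -mulrA mulrBr; rewrite [a ^+ k.+1 * (a * P x)]mulrA.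
by rewrite opprB addrC subrK.
Qed.

Lemma claim2 (a : A) : Bp (mulop a) -> forall k P, Bp P -> diffop_le k P ->
  exists R, Bp R /\ P \o mulop (a ^+ k.+1) = mulop a \o R.
Proof.
move=> Ha; elim=> [|k IH] P HP [_ HD].
  exists P; split => //; apply: functional_extensionality => x.
  by rewrite /mulop /= expr1 HD.
have HQ : Bp (fun x => P (a * x) - a * P x) :=
  Badd (Bmul HP Ha) (Bopp (Bmul Ha HP)).
have [R' [HR' ER']] := IH _ HQ (HD a).
exists (fun x => (P \o mulop (a ^+ k.+1)) x + R' x); split.
  by apply: Badd => //; apply: Bmul => //; exact: Bmulop_exp.
apply: functional_extensionality => x.
have := equal_f ER' x; rewrite /mulop /= => E.
rewrite mulrDr -E exprS -mulrA.
by rewrite addrC subrK.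
Qed.

Lemma opowSr (P : A -> A) n : opow P n.+1 = opow P n \o P.
Proof.
apply: functional_extensionality => x.
elim: n => [|n IH] //=.
move: IH; rewrite /opow /= => IH. by rewrite IH.
Qed.

Lemma opow_add (P : A -> A) : (forall x y, P (x + y) = P x + P y) ->
  forall n x y, opow P n (x + y) = opow P n x + opow P n y.
Proof.
move=> HP; elim=> [|n IH] x y //=.
by rewrite /opow /= -/(opow P n) IH HP.
Qed.

Definition Eop (Lf : A -> A) (P : A -> A) : A -> A :=
  fun x => Lf (P x) - P (Lf x).

Lemma claim3 (Lf : A -> A) : Bp Lf -> (forall x y, Lf (x + y) = Lf x + Lf y) ->
  forall j P, Bp P -> iter j.+1 (Eop Lf) P = (fun _ => 0) ->
  exists Q, Bp Q /\ opow Lf j.+1 \o P = Q \o Lf.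
Proof.
move=> HL Hadd; elim=> [|j IH] P HP HE.
  exists P; split => //; apply: functional_extensionality => x.
  have := equal_f HE x; rewrite /= /Eop => /eqP; rewrite subr_eq0 => /eqP.
  by [].
have HEP : Bp (Eop Lf P) := Badd (Bmul HL HP) (Bopp (Bmul HP HL)).
have [Q' [HQ' EQ']] := IH _ HEP (etrans (esym (iterSr _ _ _)) HE).
have HopB : forall n, Bp (opow Lf n.+1).
  elim=> [|n IHn]; first exact: HL.
  have -> : opow Lf n.+2 = Lf \o opow Lf n.+1 by [].
  exact: Bmul.
exists (fun y => Q' y + (opow Lf j.+1 \o P) y); split.
  by apply: Badd => //; apply: Bmul.
apply: functional_extensionality => x.
rewrite opowSr /=.
have -> : Lf (P x) = Eop Lf P x + P (Lf x) by rewrite /Eop subrK.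
rewrite opow_add //; have := equal_f EQ' x; rewrite /= => E; by rewrite Hadd E.
Qed.

End Helpers.
Arguments Dop {F A}.
Arguments Eop {F A}.

Theorem mainTheorem2
  (F : closedFieldType) (charF0 : [pchar F] =i pred0)
  (A C A' C' : comAlgType F)
  (L : C -> (A -> A)) (L' : C' -> (A' -> A'))
  (pi : C -> A') (pi' : C' -> A) (b : (A -> A) -> (A' -> A'))
  (hS : CIQS L) (hS' : CIQS L')
  (hpi : alg_embedding pi) (hpi' : alg_embedding pi')
  (hb : bispectral_dual L L' pi pi' b)
  (f : C) (g : C') (m n : nat)
  (hm : diffop_ord (L f) m) (hn : diffop_ord (L' g) n) :
  exists K Q R : A -> A,
    [/\ inB L pi' K, inB L pi' Q & inB L pi' R] /\
    [/\ mulop (pi' g ^+ m.+1) \o L f = K \o mulop (pi' g),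
      L f \o mulop (pi' g ^+ m.+1) = mulop (pi' g) \o R &
      opow (L f) n.+1 \o mulop (pi' g) = Q \o L f].
Proof.
have Badd := @inB_add F A C C' L pi'.
have Bopp := @inB_opp F A C C' L pi'.
have Bmul := @inB_mul F A C C' L pi'.
have Ha : inB L pi' (mulop (pi' g)) by constructor.
have HLf : inB L pi' (L f) by constructor.
case: hm => hm _; case: hn => hn _.
have [K [HK EK]] := @claim1 _ _ _ Badd Bopp Bmul _ Ha _ _ HLf hm.
have [R [HR ER]] := @claim2 _ _ _ Badd Bopp Bmul _ Ha _ _ HLf hm.
case: hb => hbL hbpi hbmul hbadd hb0.
have hbopp : forall X, inB L pi' X -> b (fun x => - X x) = (fun x => - b X x).
  move=> X HX.
  have HZ : inB L pi' (fun x => X x + - X x) by apply: Badd => //; apply: Bopp.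
  have Z0 : (fun x => X x + - X x) = (fun _ => 0).
    by apply: functional_extensionality => x; rewrite subrr.
  have bZ := proj2 (hb0 _ HZ) Z0.
  rewrite hbadd // in bZ; last by apply: Bopp.
  apply: functional_extensionality => x.
  move: (equal_f bZ x) => /= /eqP; rewrite addrC addr_eq0 => /eqP; by [].
have Htr : forall j, inB L pi' (iter j (Eop (L f)) (mulop (pi' g))) /\
    b (iter j (Eop (L f)) (mulop (pi' g))) = iter j (Dop (pi f)) (L' g).
  elim=> [|j [IHB IHb]]; first by split; [exact: Ha | exact: hbpi].
  rewrite !iterS -IHb.
  set P0 := iter j (Eop (L f)) (mulop (pi' g)) in IHB *.
  have HE1 : inB L pi' (L f \o P0) by apply: Bmul.
  have HE2 : inB L pi' (P0 \o L f) by apply: Bmul.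
  have -> : Eop (L f) P0 = fun x => (L f \o P0) x + (fun y => - (P0 \o L f) y) x by [].
  split; first exact: (Badd _ _ HE1 (Bopp _ HE2)).
  rewrite (hbadd _ _ HE1 (Bopp _ HE2)) (hbopp _ HE2) (hbmul _ _ HLf IHB) (hbmul _ _ IHB HLf) hbL.
  by apply: functional_extensionality => x.
have [HB0 Hb0] := Htr n.+1.
have Hz : iter n.+1 (Eop (L f)) (mulop (pi' g)) = (fun _ => 0).
  apply: (proj1 (hb0 _ HB0)); rewrite Hb0; exact: D_iter_zero.
have Hadd : forall x y, L f (x + y) = L f x + L f y.
  move=> x y.
  have Hlin : F_linear (L f) by case: (m) hm => [|m'] [].
  have := Hlin 1 x y; by rewrite !scale1r.
have [Q [HQ EQ]] := @claim3 _ _ _ Badd Bopp Bmul _ HLf Hadd _ _ Ha Hz.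
by exists K, Q, R.
Qed.
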